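(* Let $n\ge 4$ and let $G$ be a graph on $n$ vertices with non-negative integer weights on its edges. If the total weight of the subgraph of $G$ spanned by any four vertices is at least $3$, then the total weight of $G$ is at least $\left\lceil\tfrac{1}{3}n(n-2)\right\rceil$.
   Context: The total weight of a (sub)graph is the sum of the weights of its edges; the subgraph spanned by a set of vertices consists of those vertices and all edges of $G$ between them. *)

(* Defs.v *)
From mathcomp Require Import all_boot.
Set Implicit Arguments. Unset Strict Implicit. Unset Printing Implicit Defensive.

(* A (simple) graph on the vertex type T is given by its edge set E, a set of
   2-element subsets of T.  Edge weights are a function w : {set T} -> nat
   (only its values on edges of E matter). *)
Definition is_graph (T : finType) (E : {set {set T}}) : Prop :=
  forall e, e \in E -> #|e| = 2.

Definition total_weight (T : finType) (E : {set {set T}}) (w : {set T} -> nat) : nat :=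
  \sum_(e in E) w e.

Definition span_weight (T : finType) (E : {set {set T}}) (w : {set T} -> nat)
    (S : {set T}) : nat :=
  \sum_(e in E | e \subset S) w e.

Definition ceil_div (m d : nat) : nat := (m + d.-1) %/ d.

(* Main.v *)
Require Import Defs.
From mathcomp Require Import all_boot.
From mathcomp Require Import zify.

Lemma sum_identity (T : finType) (E : {set {set T}}) (w : {set T} -> nat)
  (S : {set T}) : is_graph E ->
  \sum_(v in S) span_weight E w (S :\ v) = (#|S| - 2) * span_weight E w S.
Proof.
move=> gE; rewrite /span_weight.
under eq_bigr => v _ do rewrite big_mkcond /=.
rewrite exchange_big /= big_distrr /= [RHS]big_mkcond /=.
apply: (eq_bigr _) => e _.
case eE: (e \in E) => /=; last by rewrite big1 // muln0.
case eS: (e \subset S) => /=; last first.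
  rewrite big1 ?muln0 // => v vS; case: ifP => // sub.
  by move: eS; rewrite (subset_trans sub) // subD1set.
have -> : \sum_(v in S) (if e \subset S :\ v then w e else 0)
   = \sum_(v in S :\: e) w e.
  rewrite big_mkcond [RHS]big_mkcond /=; apply: eq_bigr => v _.
  rewrite !inE.
  case vS: (v \in S); rewrite ?andbT ?andbF //=.
  case ve: (v \in e) => /=.
    case: ifP => // sub; have := subsetP sub v ve; by rewrite !inE eqxx.
  rewrite ifT //; apply/subsetP => x xe; rewrite !inE (subsetP eS) // andbT.
  by apply/eqP => xv; move: ve; rewrite -xv xe.
rewrite sum_nat_const cardsD (setIidPr eS) (gE _ eE) mulnC //.
Qed.

Lemma key (T : finType) (E : {set {set T}}) (w : {set T} -> nat) :
  is_graph E ->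
  (forall S : {set T}, #|S| = 4 -> 3 <= span_weight E w S) ->
  forall m, 4 <= m -> forall S : {set T}, #|S| = m ->
    m * (m - 2) <= 3 * span_weight E w S.
Proof.
move=> gE H4; elim=> [|m IH] // m4 S cS.
case: (ltnP m 4) => m4'.
  have e3 : m = 3 by lia.
  subst m.
  move: cS => /[dup] cS /H4; rewrite -?cS; lia.
have Hs := @sum_identity _ _ w S gE.
have Hb : \sum_(v in S) (m * (m - 2)) <= \sum_(v in S) 3 * span_weight E w (S :\ v).
  apply: leq_sum => v vS; apply: IH => //.
  by move: (cardsD1 v S); rewrite vS cS add1n => -[].
rewrite sum_nat_const -big_distrr /= Hs cS in Hb.
set W := span_weight E w S in Hb *.
have : W * 3 <> m ^ 2 - 2.
  move=> h; have h2 : m ^ 2 = W * 3 + 2 by lia.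
  have := f_equal (modn^~ 3) h2; rewrite /= -modnDml modnMl add0n -modnXm.
  have : m %% 3 < 3 by rewrite ltn_mod.
  by case: (m %% 3) => [|[|[|]]].
nia.
Qed.

Theorem theorem1p10 (n : nat) (T : finType) (E : {set {set T}})
    (w : {set T} -> nat) :
  4 <= n -> #|T| = n -> is_graph E ->
  (forall S : {set T}, #|S| = 4 -> 3 <= span_weight E w S) ->
  ceil_div (n * (n - 2)) 3 <= total_weight E w.
Proof.
move=> n4 cT gE H4.
have := @key _ _ w gE H4 n n4 setT; rewrite cardsT => /(_ cT).
have -> : span_weight E w setT = total_weight E w.
  by rewrite /span_weight /total_weight; apply: eq_bigl => e; rewrite subsetT andbT.
rewrite /ceil_div /=; lia.
Qed.
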